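(* Let $A$ be an invertible square rational matrix. Then $A$ is totally equimodular if and only if $(A^{-1})^\top$ is totally equimodular.
   Context: An $m\times n$ matrix is equimodular if it has full row rank $m$ and all its nonzero $m\times m$ minors have the same absolute value. A matrix is totally equimodular if every set of linearly independent rows of it forms an equimodular matrix. *)

(* Defs.v *)
From mathcomp Require Import all_boot all_order all_algebra.
Set Implicit Arguments. Unset Strict Implicit. Unset Printing Implicit Defensive.
Import Order.TTheory GRing.Theory Num.Theory.
Local Open Scope ring_scope.

(* An m x m minor is
   the determinant of the submatrix formed by m columns (selected by
   f : 'I_m -> 'I_n; a non-injective f gives a zero minor, which the
   condition ignores anyway). *)
Definition equimodular (m n : nat) (A : 'M[rat]_(m, n)) : Prop :=
  \rank A = m /\
  forall f g : 'I_m -> 'I_n,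
    \det (colsub f A) != 0 -> \det (colsub g A) != 0 ->
    `|\det (colsub f A)| = `|\det (colsub g A)|.

Definition totally_equimodular (m n : nat) (A : 'M[rat]_(m, n)) : Prop :=
  forall (k : nat) (r : 'I_k -> 'I_m), injective r ->
    row_free (rowsub r A) -> equimodular (rowsub r A).

(* Main.v *)
Require Import Defs.
From mathcomp Require Import all_boot all_order all_algebra all_fingroup.
Import Order.TTheory GRing.Theory Num.Theory.
Set Implicit Arguments. Unset Strict Implicit.
Local Open Scope ring_scope.

Lemma det_block_inv k m (M N : 'M[rat]_(k+m)) :
  M *m N = 1%:M -> \det M * \det (ulsubmx N) = \det (drsubmx M).
Proof.
move=> H.
have h : M *m block_mx (ulsubmx N) 0 (dlsubmx N) 1%:M
         = block_mx 1%:M (ursubmx M) 0 (drsubmx M).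
  have eM := submxK M; have eN := submxK N.
  have H2 := H; rewrite -eM -eN mulmx_block (scalar_mx_block k m 1) in H2.
  move/eq_block_mx: H2 => [h11 _ h21 _].
  by rewrite -{1}eM mulmx_block h11 h21 !mulmx0 !add0r !mulmx1.
move/(congr1 determinant): h.
by rewrite det_mulmx det_lblock det_ublock !det1 mulr1 mul1r.
Qed.

Lemma det_mxsub_perm N (A : 'M[rat]_N) (R F : 'I_N -> 'I_N) :
  injective R -> injective F -> `|\det (mxsub R F A)| = `|\det A|.
Proof.
move=> Ri Fi.
have -> : mxsub R F A = row_perm (perm Ri) (col_perm (perm Fi) A).
  by apply/matrixP => i j; rewrite !mxE !permE.
rewrite row_permE col_permE !det_mulmx !det_perm !normrM !normr_sign.
by rewrite mul1r mulr1.
Qed.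

Definition sumf k m n (f : 'I_k -> 'I_n) (f' : 'I_m -> 'I_n) (x : 'I_(k+m)) :=
  match split x with inl i => f i | inr j => f' j end.

Lemma sumf_inj k m n (f : 'I_k -> 'I_n) (f' : 'I_m -> 'I_n) :
  injective f -> injective f' -> (forall i j, f i != f' j) -> injective (sumf f f').
Proof.
move=> fi fi' d x y; rewrite /sumf => e.
apply: (can_inj splitK).
move: e; case: (split x) => [i|i]; case: (split y) => [j|j] e.
- by rewrite (fi _ _ e).
- by move: (d i j); rewrite e eqxx.
- by move: (d j i); rewrite e eqxx.
- by rewrite (fi' _ _ e).
Qed.

Lemma sumf_l k m n (f : 'I_k -> 'I_n) (f' : 'I_m -> 'I_n) i : sumf f f' (lshift m i) = f i.
Proof. by rewrite /sumf (unsplitK (inl _ i)). Qed.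
Lemma sumf_r k m n (f : 'I_k -> 'I_n) (f' : 'I_m -> 'I_n) i : sumf f f' (rshift k i) = f' i.
Proof. by rewrite /sumf (unsplitK (inr _ i)). Qed.

Lemma jacobi n k m (A : 'M[rat]_n) (e : k + m = n) (r f : 'I_k -> 'I_n)
  (r' f' : 'I_m -> 'I_n) : A \in unitmx ->
  injective r -> injective f -> injective r' -> injective f' ->
  (forall i j, r i != r' j) -> (forall i j, f i != f' j) ->
  `|\det A| * `|\det (mxsub f r (invmx A))| = `|\det (mxsub r' f' A)|.
Proof.
move=> Au ri fi ri' fi' dr df; subst n.
set R := sumf r r'; set F := sumf f f'.
have Ri : injective R by apply: sumf_inj.
have Fi : injective F by apply: sumf_inj.
have H : mxsub R F A *m mxsub F R (invmx A) = 1%:M.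
  apply/matrixP => x y; rewrite !mxE.
  have := congr1 (fun M : 'M_(k+m) => M (R x) (R y)) (mulmxV Au).
  rewrite !mxE /= -(inj_eq Ri) => <-.
  rewrite [RHS](reindex_inj Fi); by apply: eq_bigr => z _; rewrite !mxE.
have := @det_block_inv k m _ _ H.
have -> : ulsubmx (mxsub F R (invmx A)) = mxsub f r (invmx A).
  by apply/matrixP => i j; rewrite !mxE /F /R !sumf_l.
have -> : drsubmx (mxsub R F A) = mxsub r' f' A.
  by apply/matrixP => i j; rewrite !mxE /F /R !sumf_r.
move=> <-; by rewrite normrM det_mxsub_perm.
Qed.

Lemma compl n k (r : 'I_k -> 'I_n) : injective r ->
  exists r' : 'I_(n-k) -> 'I_n, injective r' /\ forall i j, r i != r' j.
Proof.
move=> ri; pose S := [set x | x \notin codom r].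
have cS : (n - k)%N = #|S|.
  have h := cardC (mem (codom r)); rewrite card_codom // !card_ord in h.
  rewrite -{1}h addKn; apply: eq_card => x; rewrite !inE.
  by [].
exists (fun i => enum_val (cast_ord cS i)); split.
  by move=> i j /enum_val_inj /cast_ord_inj.
move=> i j; have := enum_valP (cast_ord cS j); rewrite inE.
by apply: contra => /eqP <-; exact: codom_f.
Qed.

Lemma rows_free n k (A : 'M[rat]_n) (r : 'I_k -> 'I_n) :
  A \in unitmx -> injective r -> row_free (rowsub r A).
Proof.
move=> Au ri; rewrite rowsubE /row_free mxrankMfree ?row_free_unit //.
apply/eqP/anti_leq; rewrite rank_leq_row /=.
have h : rowsub r 1%:M *m (rowsub r (1%:M : 'M[rat]_n))^T = 1%:M.
  apply/matrixP => i j; rewrite !mxE.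
  rewrite (bigD1 (r i)) //= big1 ?addr0.
    by rewrite !mxE eqxx (inj_eq ri) mul1r eq_sym.
  by move=> l /negbTE nl; rewrite !mxE eq_sym nl mul0r.
by rewrite -{1}(mxrank1 rat k) -h mxrankM_maxl.
Qed.

Lemma minor_inj k n (X : 'M[rat]_(k, n)) (f : 'I_k -> 'I_n) :
  \det (colsub f X) != 0 -> injective f.
Proof.
move=> H i j e; apply/eqP; apply: contraNT H => ne; apply/eqP.
rewrite -det_tr; apply: (determinant_alternate ne) => l; by rewrite !mxE e.
Qed.

Lemma fwd n (A : 'M[rat]_n) : A \in unitmx ->
  totally_equimodular A -> totally_equimodular (invmx A)^T.
Proof.
move=> Au TE k r ri rf; split; first exact/eqP.
move=> f g nf ng.
have fi := minor_inj nf; have gi := minor_inj ng.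
have kn : (k <= n)%N by have := leq_card r ri; rewrite !card_ord.
have e : (k + (n - k))%N = n by rewrite subnKC.
have [r' [ri' dr]] := compl ri.
have [f' [fi' df]] := compl fi.
have [g' [gi' dg]] := compl gi.
have dA : `|\det A| != 0 by rewrite normr_eq0 -unitfE -unitmxE.
have Ef := jacobi e Au ri fi ri' fi' dr df.
have Eg := jacobi e Au ri gi ri' gi' dr dg.
have mB : forall h : 'I_k -> 'I_n,
    \det (colsub h (rowsub r (invmx A)^T)) = \det (mxsub h r (invmx A)).
  by move=> h; rewrite -det_tr; congr (\det _); apply/matrixP => i j; rewrite !mxE.
have mA : forall h : 'I_(n-k) -> 'I_n,
    \det (colsub h (rowsub r' A)) = \det (mxsub r' h A).
  by move=> h; congr (\det _); apply/matrixP => i j; rewrite !mxE.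
have [_ eqm] := TE _ r' ri' (rows_free Au ri').
rewrite !mB; apply: (mulfI dA); rewrite Ef Eg -!mA; apply: eqm.
  by rewrite -normr_eq0 mA -Ef mulf_neq0 // normr_eq0 -mB.
by rewrite -normr_eq0 mA -Eg mulf_neq0 // normr_eq0 -mB.
Qed.

Theorem mainTheorem2 (n : nat) (A : 'M[rat]_n) :
  A \in unitmx ->
  (totally_equimodular A <-> totally_equimodular (invmx A)^T).
Proof.
move=> Au; split; first exact: fwd.
move=> TB; have Bu : (invmx A)^T \in unitmx by rewrite unitmx_tr unitmx_inv.
have := fwd Bu TB; by rewrite trmx_inv trmxK invmxK.
Qed.
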